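(* Let $K$ be an admissible kernel on $X\times Y$ with constant $C_K$. Then $U_K^{m_Y}(x)=C_K$ for every $x\in X$.
   Context: $(X,d_X)$ and $(Y,d_Y)$ are compact metric spaces and $G$ is a compact topological group acting isometrically and transitively on both $X$ and $Y$. $m_X$ and $m_Y$ denote the unique $G$-invariant Radon (Borel) probability measures on $X$ and $Y$. A Borel measurable $K:X\times Y\to\mathbb{R}\cup\{-\infty\}$ is an admissible kernel if: (i) there is $B_K\in[0,\infty)$ with $-\infty\le K(x,y)\le B_K$ for all $x,y$; (ii) $\int_X|K(x,y)|\,dm_X(x)<\infty$ for every $y\in Y$; (iii) for every $y$, $K(\cdot,y)$ is upper semi-continuous; (iv) $K(g(x),y)=K(x,g^{-1}(y))$ for all $g\in G,x\in X,y\in Y$. The constant $C_K$ is the common value of $\int_X K(x,y)\,dm_X(x)$, which does not depend on $y\in Y$. For a Borel probability measure $\mu$ on $Y$, $U_K^\mu(x)=\int_Y K(x,y)\,d\mu(y)$. *)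

(* Defs.v *)
From HB Require Import structures.
From mathcomp Require Import all_boot all_order all_algebra.
From mathcomp Require Import all_classical all_reals all_analysis.
From mathcomp Require Import measurable_realfun.
Set Implicit Arguments. Unset Strict Implicit. Unset Printing Implicit Defensive.
Import Order.TTheory GRing.Theory Num.Theory.
Import numFieldNormedType.Exports.
Local Open Scope classical_set_scope.
Local Open Scope ring_scope.

(** Metric spaces with a distinguished point (the measurable-type structure
    of MathComp-Analysis requires a pointed carrier). *)
#[short(type="pointedMetricType")]
HB.structure Definition PointedMetric (K : numDomainType) :=
  { M of Metric K M & isPointed M }.

Notation BorelT T := (g_sigma_algebraType (@open T)).

Definition compact_topological_group (G : topologicalType)
    (mul : G -> G -> G) (inv : G -> G) (one : G) : Prop :=
  [/\ associative mul, left_id one mul, left_inverse one inv mul,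
      continuous (fun p : G * G => mul p.1 p.2) /\ continuous inv
    & compact [set: G]].

Definition isometric_transitive_action (R : realType) (G : Type)
    (mul : G -> G -> G) (one : G) (X : metricType R) (act : G -> X -> X) :
    Prop :=
  [/\ forall x, act one x = x,
      forall g h x, act (mul g h) x = act g (act h x),
      forall g x x', mdist (act g x) (act g x') = mdist x x'
    & forall x x', exists g, act g x = x'].

(** [m] is a [G]-invariant (Borel) measure on [X]:  m (g A) = m A, written
    equivalently as m (g^{-1}-preimage) for all g. *)
Definition G_invariant (R : realType) (G : Type) (X : ptopologicalType)
    (act : G -> X -> X) (m : set (BorelT X) -> \bar R) : Prop :=
  forall g (A : set (BorelT X)), measurable A -> m (act g @^-1` A) = m A.

Definition upper_semicontinuous_e (R : realType) (X : ptopologicalType)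
    (f : X -> \bar R) : Prop :=
  forall (x : X) (a : \bar R), (f x < a)%E -> \forall z \near x, (f z < a)%E.

(** Admissible kernel (conditions (i)-(iv) of the paper, plus Borel
    measurability of [K] on [X x Y]). *)
Definition admissible_kernel (R : realType) (G : Type) (inv : G -> G)
    (X Y : ptopologicalType) (actX : G -> X -> X) (actY : G -> Y -> Y)
    (mX : set (BorelT X) -> \bar R) (K : X -> Y -> \bar R) : Prop :=
  [/\ measurable_fun [set: BorelT X * BorelT Y]
        (fun p : BorelT X * BorelT Y => K p.1 p.2),
      exists BK : R, 0 <= BK /\ forall x y, (K x y <= BK%:E)%E,
      forall y, (\int[mX]_(x in [set: BorelT X]) `|K x y| < +oo)%E,
      forall y, upper_semicontinuous_e (fun x => K x y)
    & forall g x y, K (actX g x) y = K x (actY (inv g) y)].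

Definition potential (R : realType) (X Y : ptopologicalType)
    (K : X -> Y -> \bar R) (mu : set (BorelT Y) -> \bar R) (x : X) : \bar R :=
  (\int[mu]_(y in [set: BorelT Y]) K x y)%E.

(* Main.v *)
Require Import Defs.
From HB Require Import structures.
From mathcomp Require Import all_boot all_order all_algebra.
From mathcomp Require Import all_classical all_reals all_analysis.
From mathcomp Require Import measurable_realfun.
Import Order.TTheory GRing.Theory Num.Theory.
Import numFieldNormedType.Exports.
Local Open Scope classical_set_scope.
Local Open Scope ring_scope.

Lemma iso_continuous (R : realType) (X : pointedMetricType R) (f : X -> X) :
  (forall x x', mdist (f x) (f x') = mdist x x') -> continuous f.
Proof.
move=> iso x; apply/cvg_ballP => e e0.
near=> z.
have : ball x e z by near: z; exact: nbhsx_ballx.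
by rewrite /= !ballEmdist /= iso.
Unshelve. all: by end_near.
Qed.

Lemma cont_meas (T : ptopologicalType) (f : T -> T) :
  continuous f -> measurable_fun [set: BorelT T] (f : BorelT T -> BorelT T).
Proof.
move=> cf; have := @measurability _ _ (BorelT T) (BorelT T) setT f (@open T).
  apply => //.
move=> B [A oA <-]; rewrite setTI.
apply: sub_sigma_algebra.
apply: open_comp => // y _; exact: cf.
Qed.

Lemma inv_integral (R : realType) d (T : measurableType d)
  (m : {measure set T -> \bar R}) (phi : T -> T)
  (mphi : measurable_fun setT phi)
  (hinv : forall A, measurable A -> m (phi @^-1` A) = m A)
  (f : T -> \bar R) (mf : measurable_fun setT f) :
  (\int[m]_x f (phi x) = \int[m]_x f x)%E.
Proof.
have h g : measurable_fun setT g -> (forall x, 0 <= g x)%E ->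
    (\int[m]_x g (phi x) = \int[m]_x g x)%E.
  move=> mg g0.
  rewrite [RHS](eq_measure_integral (pushforward m phi)); last first.
    by move=> A mA _; rewrite /pushforward /= -hinv.
  by rewrite (ge0_integral_pushforward mphi).
rewrite integralE [RHS]integralE; congr (_ - _)%E.
- rewrite -(h f^\+%E); [|exact: measurable_funepos|by move=> ?; exact: funepos_ge0].
  by apply: eq_integral => y _; rewrite funepos_comp.
- rewrite -(h f^\-%E); [|exact: measurable_funeneg|by move=> ?; exact: funeneg_ge0].
  by apply: eq_integral => y _; rewrite funeneg_comp.
Qed.

Lemma grp_invinv (G : Type) (mul : G -> G -> G) (inv : G -> G) (one : G) :
  associative mul -> left_id one mul -> left_inverse one inv mul ->
  forall g, inv (inv g) = g.
Proof.
move=> assoc lid linv.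
have rinv a : mul a (inv a) = one.
  rewrite -[mul a (inv a)]lid -(linv (inv a)) -assoc [mul (inv a) (mul a (inv a))]assoc.
  by rewrite linv lid linv.
have rid a : mul a one = a by rewrite -(linv a) assoc rinv lid.
move=> g; by rewrite -[RHS]lid -(linv (inv g)) -assoc linv rid.
Qed.

Lemma pcst (R : realType) d (T : measurableType d) (P : probability T R)
  (c : \bar R) : (\int[P]_(x in [set: T]) (cst c) x = c)%E.
Proof. rewrite integral_cst //; rewrite -[RHS]mule1; congr (c * _)%E; exact: probability_setT. Qed.

Theorem lemma4p5 (R : realType) (X Y : pointedMetricType R)
    (G : topologicalType) (mul : G -> G -> G) (inv : G -> G) (one : G)
    (actX : G -> X -> X) (actY : G -> Y -> Y)
    (mX : probability (BorelT X) R) (mY : probability (BorelT Y) R)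
    (K : X -> Y -> \bar R) :
  compact [set: X] -> compact [set: Y] ->
  compact_topological_group mul inv one ->
  isometric_transitive_action mul one actX ->
  isometric_transitive_action mul one actY ->
  G_invariant actX mX -> G_invariant actY mY ->
  admissible_kernel inv actX actY mX K ->
  forall (x : X) (y0 : Y),
    potential K mY x = (\int[mX]_(x' in [set: BorelT X]) K x' y0)%E.
Proof.
move=> _ _ [assoc lid linv _ _] [_ _ isoX trX] [_ _ isoY trY] invX invY
  [mK _ intK _ Kact] x y0.
have invinv := @grp_invinv G mul inv one assoc lid linv.
have mKx x0 : measurable_fun [set: BorelT Y] (fun y : BorelT Y => K x0 y).
  exact: (measurable_fun_pair2 (T1:=BorelT X) (T2:=BorelT Y) x0 mK).
have mKy y : measurable_fun [set: BorelT X] (fun x0 : BorelT X => K x0 y).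
  exact: (measurable_fun_pair1 (T1:=BorelT X) (T2:=BorelT Y) y mK).
have mactX g : measurable_fun [set: BorelT X] (actX g : BorelT X -> BorelT X).
  by apply: cont_meas; apply: iso_continuous; exact: isoX.
have mactY g : measurable_fun [set: BorelT Y] (actY g : BorelT Y -> BorelT Y).
  by apply: cont_meas; apply: iso_continuous; exact: isoY.
have UC x1 x2 : potential K mY x1 = potential K mY x2.
  have [g <-] := trX x2 x1.
  rewrite /potential; under eq_integral do rewrite Kact.
  apply: (@inv_integral R _ _ mY (actY (inv g))) => //.
  by move=> A mA; apply: invY.
have CC y : (\int[mX]_(x' in [set: BorelT X]) K x' y =
             \int[mX]_(x' in [set: BorelT X]) K x' y0)%E.
  have [h <-] := trY y0 y.
  transitivity (\int[mX]_(x' in [set: BorelT X]) K (actX (inv h) x') y0)%E.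
    by apply: eq_integral => x' _; rewrite Kact invinv.
  apply: (@inv_integral R _ _ mX (actX (inv h))) => //.
  by move=> A mA; apply: invX.
have AC y : (\int[mX]_(x' in [set: BorelT X]) `|K x' y| =
             \int[mX]_(x' in [set: BorelT X]) `|K x' y0|)%E.
  have [h <-] := trY y0 y.
  transitivity (\int[mX]_(x' in [set: BorelT X]) `|K (actX (inv h) x') y0|)%E.
    by apply: eq_integral => x' _; rewrite Kact invinv.
  apply: (@inv_integral R _ _ mX (actX (inv h)) _ _ (fun x1 => `|K x1 y0|)%E) => //.
    by move=> A mA; apply: invX.
  exact: measurableT_comp.
pose f := fun p : BorelT X * BorelT Y => K p.1 p.2.
have intf : (mX \x mY)%E.-integrable setT f.
  apply/(integrable21ltyP _ _ mK).
  rewrite (eq_integral (fun _ => \int[mX]_(x' in [set: BorelT X]) `|K x' y0|)%E); last first.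
    by move=> y _; exact: AC.
  by rewrite pcst intK.
have F := Fubini intf.
have L : (\int[mX]_x0 \int[mY]_y f (x0, y))%E = potential K mY x.
  transitivity (\int[mX]_(x0 in [set: BorelT X]) (cst (potential K mY x)) x0)%E.
    by apply: eq_integral => x0 _; exact: (UC x0 x).
  exact: pcst.
have Rr : (\int[mY]_y \int[mX]_x0 f (x0, y))%E =
   (\int[mX]_(x' in [set: BorelT X]) K x' y0)%E.
  transitivity (\int[mY]_(y in [set: BorelT Y])
      (cst (\int[mX]_(x' in [set: BorelT X]) K x' y0)%E) y)%E.
    by apply: eq_integral => y _; exact: (CC y).
  exact: pcst.
by rewrite -L F Rr.
Qed.
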